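(* As formal power series in $t$, $$\sum_{m\ge 1}\frac{\big((m-1)!\big)^2t^{m}}{\prod_{k=1}^m (1+k^2 t)}=t \qquad\text{and}\qquad \sum_{m\ge 1}\frac{m!(m-1)!\,t^{m}}{\prod_{k=1}^m \big(1+k(k+1)t\big)}=t.$$ *)

(* Defs.v *)
From mathcomp Require Import all_boot all_order all_algebra.
Set Implicit Arguments. Unset Strict Implicit. Unset Printing Implicit Defensive.
Import Order.TTheory GRing.Theory Num.Theory.
Local Open Scope ring_scope.

Definition fps := nat -> rat.

Definition fps_of_poly (p : {poly rat}) : fps := fun n => p`_n.

Definition fps_mul (f g : fps) : fps :=
  fun n => \sum_(i < n.+1) f i * g (n - i)%N.

(* multiplicative inverse of a power series with invertible constant term:
   g 0 = 1/f 0,  g n = -(1/f 0) * sum_{i=1}^n f i * g (n-i).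
   inv_seq f n is the list [g 0; ...; g n]. *)
Fixpoint inv_seq (f : fps) (n : nat) : seq rat :=
  match n with
  | 0 => [:: (f 0%N)^-1]
  | n'.+1 => let s := inv_seq f n' in
      rcons s (- (f 0%N)^-1 * \sum_(j < n'.+1) f j.+1 * nth 0 s (n' - j)%N)
  end.

Definition fps_inv (f : fps) : fps := fun n => nth 0 (inv_seq f n) n.

(* the family (u_m)_{m >= 1} is summable in the t-adic topology with sum S:
   for each n, the partial sums of the n-th coefficients are eventually S n *)
Definition fps_sum_from1 (u : nat -> fps) (S : fps) : Prop :=
  forall n : nat, exists M : nat, forall N : nat, (M <= N)%N ->
    \sum_(1 <= m < N) u m n = S n.

Definition den (a : nat -> nat) (m : nat) : {poly rat} :=
  \prod_(1 <= k < m.+1) (1 + (a k)%:R *: 'X).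

Definition term (c : nat -> nat) (a : nat -> nat) (m : nat) : fps :=
  fps_mul (fps_of_poly ((c m)%:R *: 'X^m)) (fps_inv (fps_of_poly (den a m))).

(* Main.v *)
Require Import Defs.
From mathcomp Require Import all_boot all_order all_algebra.
From mathcomp Require Import ring.
From Stdlib Require Import FunctionalExtensionality.
Set Implicit Arguments. Unset Strict Implicit. Unset Printing Implicit Defensive.
Import Order.TTheory GRing.Theory Num.Theory.
Local Open Scope ring_scope.

Lemma mul_agree (f g : fps) n (p q : {poly rat}) :
  (forall i, (i <= n)%N -> f i = p`_i) -> (forall i, (i <= n)%N -> g i = q`_i) ->
  fps_mul f g n = (p * q)`_n.
Proof.
move=> hf hg; rewrite /fps_mul coefM; apply: eq_bigr => i _.
rewrite hf; last by rewrite -ltnS.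
by rewrite hg // leq_subr.
Qed.

Definition tr n (f : fps) : {poly rat} := \poly_(i < n.+1) f i.

Lemma tr_agree n f i : (i <= n)%N -> f i = (tr n f)`_i.
Proof. by move=> h; rewrite coef_poly ltnS h. Qed.

Lemma fps_mulA f g h : fps_mul (fps_mul f g) h = fps_mul f (fps_mul g h).
Proof.
apply: functional_extensionality => n.
rewrite (@mul_agree _ _ n (tr n f * tr n g) (tr n h)); last 2 first.
- move=> i hi; apply: mul_agree => j hj; apply: tr_agree; exact: leq_trans hj hi.
- exact: tr_agree.
rewrite (@mul_agree _ _ n (tr n f) (tr n g * tr n h)); last 2 first.
- exact: tr_agree.
- move=> i hi; apply: mul_agree => j hj; apply: tr_agree; exact: leq_trans hj hi.
by rewrite mulrA.
Qed.

Lemma fps_mulC f g : fps_mul f g = fps_mul g f.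
Proof.
apply: functional_extensionality => n.
rewrite (@mul_agree _ _ n (tr n f) (tr n g)); try exact: tr_agree.
rewrite (@mul_agree _ _ n (tr n g) (tr n f)); try exact: tr_agree.
by rewrite mulrC.
Qed.

Lemma fps_polyM p q : fps_of_poly (p * q) = fps_mul (fps_of_poly p) (fps_of_poly q).
Proof. apply: functional_extensionality => n; by rewrite /fps_of_poly /fps_mul coefM. Qed.

Lemma fps_mul1 f : fps_mul (fps_of_poly 1) f = f.
Proof.
apply: functional_extensionality => n.
rewrite /fps_mul big_ord_recl /fps_of_poly coef1 /= mul1r subn0 big1 ?addr0 //.
by move=> i _; rewrite coef1 mul0r.
Qed.

Lemma fps_mulBl p q h n :
  fps_mul (fps_of_poly p) h n - fps_mul (fps_of_poly q) h n
  = fps_mul (fps_of_poly (p - q)) h n.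
Proof.
rewrite /fps_mul /fps_of_poly -sumrB; apply: eq_bigr => i _.
by rewrite coefB mulrBl.
Qed.

Lemma size_inv_seq f n : size (inv_seq f n) = n.+1.
Proof. by elim: n => [|n IH] //=; rewrite size_rcons IH. Qed.

Lemma inv_seq_stable f k m : (k <= m)%N -> nth 0 (inv_seq f m) k = fps_inv f k.
Proof.
elim: m => [|m IH]; first by rewrite leqn0 => /eqP ->.
rewrite leq_eqVlt => /orP [/eqP -> //|hk].
by rewrite /= nth_rcons size_inv_seq hk IH.
Qed.

Lemma fps_invS f n : fps_inv f n.+1 =
  - (f 0%N)^-1 * \sum_(j < n.+1) f j.+1 * fps_inv f (n - j)%N.
Proof.
rewrite {1}/fps_inv /= nth_rcons size_inv_seq ltnn eqxx.
congr (_ * _); apply: eq_bigr => j _; by rewrite inv_seq_stable // leq_subr.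
Qed.

Lemma fps_mulV f : f 0%N != 0 -> fps_mul f (fps_inv f) = fps_of_poly 1.
Proof.
move=> h0; apply: functional_extensionality => n.
rewrite /fps_of_poly coef1; case: n => [|n].
  by rewrite /fps_mul big_ord_recl big_ord0 addr0 /= /fps_inv /= mulfV.
rewrite /fps_mul big_ord_recl /= subn0 fps_invS.
under eq_bigr => i _ do rewrite subSS.
by rewrite mulrA mulrN mulfV // mulN1r addNr.
Qed.

Definition Q (a : nat -> nat) m := fps_of_poly (den a m).
Definition Iv (a : nat -> nat) m := fps_inv (Q a m).

Lemma denS a m : den a m.+1 = den a m * (1 + (a m.+1)%:R *: 'X).
Proof. by rewrite /den big_nat_recr. Qed.

Lemma den0 a : den a 0 = 1.
Proof. by rewrite /den big_geq. Qed.

Lemma Q0 a m : Q a m 0%N != 0.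
Proof.
rewrite /Q /fps_of_poly; elim: m => [|m IH]; first by rewrite den0 coef1.
rewrite denS coef0M coefD coef1 coefZ coefX /= mulr0 addr0 mulr1 //.
Qed.

Lemma fps_shuf x y z w :
  fps_mul (fps_mul (fps_mul x y) z) w = fps_mul (fps_mul x w) (fps_mul y z).
Proof.
rewrite !fps_mulA; congr (fps_mul x _).
by rewrite (fps_mulC w) fps_mulA.
Qed.

Lemma IvS a m : Iv a m = fps_mul (fps_of_poly (1 + (a m.+1)%:R *: 'X)) (Iv a m.+1).
Proof.
set L := fps_of_poly _.
have hQ : Q a m.+1 = fps_mul (Q a m) L by rewrite /Q denS fps_polyM.
rewrite -{1}(fps_mul1 (Iv a m)) -(fps_mulV (Q0 a m.+1)) -/(Iv a m.+1).
rewrite {1}hQ fps_shuf fps_mulV ?Q0 //.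
by rewrite fps_mul1.
Qed.

Lemma Iv0 a : Iv a 0 = fps_of_poly 1.
Proof.
rewrite -(fps_mul1 (Iv a 0)) -{1}(den0 a) -/(Q a 0) fps_mulV //.
exact: Q0.
Qed.

Definition Rr (e a : nat -> nat) N :=
  fps_mul (fps_of_poly ((e N)%:R *: 'X^(N.+1))) (Iv a N).

Lemma step (c e a : nat -> nat) m n :
  c m.+1 = e m -> e m.+1 = (e m * a m.+1)%N ->
  term c a m.+1 n = Rr e a m n - Rr e a m.+1 n.
Proof.
move=> hc he; rewrite /Rr IvS -fps_mulA -fps_polyM fps_mulBl /term.
congr (fps_mul (fps_of_poly _) _ n).
rewrite hc he natrM -!mul_polyC polyCM.
rewrite !exprS; ring.
Qed.

Lemma tele (c e a : nat -> nat) n N :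
  e 0%N = 1%N ->
  (forall m, c m.+1 = e m) -> (forall m, e m.+1 = (e m * a m.+1)%N) ->
  \sum_(1 <= m < N.+1) term c a m n = fps_of_poly 'X n - Rr e a N n.
Proof.
move=> h0 hc he; elim: N => [|N IH].
  rewrite big_geq // /Rr Iv0 h0 -fps_polyM mulr1 scale1r expr1.
  by rewrite subrr.
rewrite big_nat_recr //= IH (step n (hc N) (he N)); ring.
Qed.

Lemma Rr_low e a N n : (n <= N)%N -> Rr e a N n = 0.
Proof.
move=> h; rewrite /Rr /fps_mul big1 // => i _.
rewrite /fps_of_poly coefZ coefXn.
have : (i < N.+1)%N by rewrite ltnS; apply: leq_trans h; rewrite -ltnS.
by rewrite ltn_neqAle => /andP [/negbTE -> _]; rewrite mulr0 mul0r.
Qed.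

Lemma general (c e a : nat -> nat) :
  e 0%N = 1%N ->
  (forall m, c m.+1 = e m) -> (forall m, e m.+1 = (e m * a m.+1)%N) ->
  fps_sum_from1 (term c a) (fps_of_poly 'X).
Proof.
move=> h0 hc he; rewrite /fps_sum_from1 => n; exists n.+2 => N; case: N => [|N] hN //.
rewrite (tele _ _ h0 hc he) Rr_low ?subr0 //.
exact: ltnW hN.
Qed.

Theorem corollary5p1 :
  fps_sum_from1 (term (fun m => (m.-1)`! ^ 2)%N (fun k => k ^ 2)%N)
                (fps_of_poly 'X)
  /\
  fps_sum_from1 (term (fun m => m`! * (m.-1)`!)%N (fun k => k * k.+1)%N)
                (fps_of_poly 'X).
Proof.
split.
- apply: (@general _ (fun m => (m`! ^ 2)%N)) => // m.
  by rewrite factS expnMn mulnC.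
- apply: (@general _ (fun m => (m`! * m.+1`!)%N)) => // m.
  rewrite /= mulnC //.
  rewrite (factS m.+1) factS; ring.
Qed.
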